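(* Let $n,m\in\mathbb{N}$ and $f:\mathbb{F}_2^n\to\mathbb{F}_2$. Then $f$ is $m$-bent if and only if $C^{(m)}_f(\mathbf{z})=0$ for all $\mathbf{z}\in\mathbb{F}_2^n\setminus\{0^n\}$ and $C^{(m)}_f(0^n)=2^n$.
   Context: $\zeta_m=e^{2\pi i/m}$; $wt$ is Hamming weight; $\mathbf{x}\cdot\mathbf{y}=\bigoplus_i x_iy_i\in\mathbb{F}_2$; $\mathbf{x}\odot\mathbf{y}=\sum_i x_iy_i$ computed in the integers. The $m$-Hadamard transform is $\mathcal{H}^{(m)}_f(\boldsymbol{\omega})=2^{-n/2}\sum_{\mathbf{x}\in\mathbb{F}_2^n}(-1)^{f(\mathbf{x})\oplus\mathbf{x}\cdot\boldsymbol{\omega}}\zeta_m^{wt(\mathbf{x})}$; $f$ is called $m$-bent if $|\mathcal{H}^{(m)}_f(\boldsymbol{\omega})|=1$ for all $\boldsymbol{\omega}\in\mathbb{F}_2^n$. The $m$-autocorrelation is $C^{(m)}_{f}(\mathbf{y})=\sum_{\mathbf{x}\in\mathbb{F}_2^n}(-1)^{f(\mathbf{x})\oplus f(\mathbf{x}\oplus\mathbf{y})}(\zeta_m^2)^{\mathbf{x}\odot\mathbf{y}}$. *)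

(* Defs.v *)
From mathcomp Require Import all_boot all_order all_algebra.
From mathcomp Require Import complex.
From mathcomp Require Import reals trigo.
Set Implicit Arguments. Unset Strict Implicit. Unset Printing Implicit Defensive.
Import Order.TTheory GRing.Theory Num.Theory.
Local Open Scope ring_scope.
Local Open Scope complex_scope.

Notation vec n := {ffun 'I_n -> bool}.

Definition vxor n (x y : vec n) : vec n := [ffun i => x i (+) y i].
Definition vdot n (x y : vec n) : bool := \big[addb/false]_(i < n) (x i && y i).
Definition vodot n (x y : vec n) : nat := (\sum_(i < n) (x i && y i))%N.
Definition wt n (x : vec n) : nat := (\sum_(i < n) x i)%N.
Definition vzero n : vec n := [ffun _ => false].

Definition zeta (R : realType) (m : nat) : R[i] :=
  (cos (2 * pi / m%:R))%:C + 'i * (sin (2 * pi / m%:R))%:C.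

Definition sgn (R : realType) (b : bool) : R[i] := (-1) ^+ b.

Definition mHadamard (R : realType) (m n : nat) (f : vec n -> bool) (w : vec n)
  : R[i] :=
  ((Num.sqrt (2 : R))^-1 ^+ n)%:C *
  \sum_(x : vec n) sgn R (f x (+) vdot x w) * zeta R m ^+ wt x.

Definition mbent (R : realType) (m n : nat) (f : vec n -> bool) : Prop :=
  forall w : vec n, `|mHadamard R m f w| = 1.

Definition mautocorr (R : realType) (m n : nat) (f : vec n -> bool) (y : vec n)
  : R[i] :=
  \sum_(x : vec n) sgn R (f x (+) f (vxor x y)) * (zeta R m ^+ 2) ^+ vodot x y.

(* Main.v *)
Require Import Defs.
From mathcomp Require Import all_boot all_order all_algebra.
From mathcomp Require Import complex.
From mathcomp Require Import reals trigo.
From mathcomp Require Import ring.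
Import Order.TTheory GRing.Theory Num.Theory.
Local Open Scope ring_scope.

Lemma zeta_conj (R : realType) m : zeta R m * (zeta R m)^* = 1.
Proof.
rewrite /zeta. have h := @cos2Dsin2 R (2 * pi / m%:R).
set a := cos _ in h *. set b := sin _ in h *.
apply/eqP; rewrite eq_complex /=.
rewrite !(mul0r, mul1r, mulr0, add0r, subr0, sub0r, addr0).
apply/andP; split; apply/eqP.
  by rewrite mulrN opprK -!expr2.
by rewrite mulrN mulrC addNr.
Qed.

Lemma sgnD (R : realType) a b : sgn R (a (+) b) = sgn R a * sgn R b.
Proof. exact: signr_addb. Qed.

Lemma sgnK (R : realType) b : sgn R b * sgn R b = 1.
Proof. by rewrite -sgnD addbb /sgn expr0. Qed.

Lemma sgn_conj (R : realType) b : (sgn R b)^* = sgn R b.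
Proof. exact: rmorph_sign. Qed.

Lemma realC_conj (R : realType) (x : R) : (x%:C%C)^* = x%:C%C.
Proof. by apply/eqP; rewrite eq_complex /= oppr0 !eqxx. Qed.

Lemma vdot_xor n (x y w : vec n) : vdot (vxor x y) w = vdot x w (+) vdot y w.
Proof.
rewrite /vdot -big_split /=; apply: eq_bigr => i _; rewrite ffunE.
by case: (x i) (y i) (w i) => [] [] [].
Qed.

Lemma vxorK n (x y : vec n) : vxor x (vxor x y) = y.
Proof. by apply/ffunP => i; rewrite !ffunE addKb. Qed.

Lemma vxor_inj n (x : vec n) : injective (vxor x).
Proof. exact: (can_inj (@vxorK n x)). Qed.

Lemma vxor_eq0 n (z y : vec n) : (vxor z y == vzero n) = (z == y).
Proof.
apply/eqP/eqP => [h|->].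
  apply/ffunP => i; move/ffunP: h => /(_ i); rewrite !ffunE.
  by case: (z i) (y i) => [] [].
by apply/ffunP => i; rewrite !ffunE addbb.
Qed.

Lemma wt_xor n (x y : vec n) : (wt x + wt y = wt (vxor x y) + 2 * vodot x y)%N.
Proof.
rewrite /wt /vodot big_distrr -!big_split /=; apply: eq_bigr => i _.
by rewrite ffunE; case: (x i) (y i) => [] [].
Qed.

Lemma sgn_vdot (R : realType) n (y w : vec n) :
  sgn R (vdot y w) = \prod_i sgn R (y i && w i).
Proof.
rewrite /vdot; apply: (big_morph (sgn R)) => [a b|]; first exact: sgnD.
by rewrite /sgn expr0.
Qed.

Lemma orth (R : realType) n (y : vec n) :
  \sum_(w : vec n) sgn R (vdot y w) = if y == vzero n then 2 ^+ n else 0.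
Proof.
under eq_bigr do rewrite sgn_vdot.
rewrite -(bigA_distr_bigA (fun i b => sgn R (y i && b))) /=.
case: eqP => [->|ne].
  under eq_bigr do rewrite big_bool ffunE /=.
  by rewrite prodr_const card_ord /sgn expr0.
case: (pickP (fun i => y i)) => [i yi|none].
  rewrite (bigD1 i) //= big_bool yi /= /sgn expr0 expr1 addNr.
  by rewrite mul0r.
by exfalso; apply: ne; apply/ffunP => i; rewrite ffunE; apply/negbTE/negbT.
Qed.

Definition gfun (R : realType) m n (f : vec n -> bool) (x : vec n) : R[i] :=
  sgn R (f x) * zeta R m ^+ wt x.
Arguments gfun R m {n} f x.
Definition Gsum (R : realType) m n (f : vec n -> bool) (w : vec n) : R[i] :=
  \sum_x sgn R (f x (+) vdot x w) * zeta R m ^+ wt x.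
Arguments Gsum R m {n} f w.
Definition Acor (R : realType) m n (f : vec n -> bool) (y : vec n) : R[i] :=
  \sum_x gfun R m f x * (gfun R m f (vxor x y))^*.
Arguments Acor R m {n} f y.


Lemma Gsum_g (R : realType) m n (f : vec n -> bool) w :
  Gsum R m f w = \sum_x gfun R m f x * sgn R (vdot x w).
Proof. by apply: eq_bigr => x _; rewrite /gfun sgnD; ring. Qed.

Lemma parseval (R : realType) m n (f : vec n -> bool) w :
  Gsum R m f w * (Gsum R m f w)^* = \sum_y Acor R m f y * sgn R (vdot y w).
Proof.
rewrite Gsum_g rmorph_sum /= big_distrl /=.
transitivity (\sum_x \sum_y gfun R m f x * (gfun R m f (vxor x y))^* * sgn R (vdot y w)).
  apply: eq_bigr => x _; rewrite big_distrr /=.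
  rewrite (reindex_inj (@vxor_inj n x)) /=.
  apply: eq_bigr => y _; rewrite rmorphM /= sgn_conj vdot_xor sgnD.
  have := sgnK R (vdot x w); set s := sgn R (vdot x w) => hs.
  rewrite -[RHS]mulr1 -hs; ring.
rewrite exchange_big /=; apply: eq_bigr => y _.
by rewrite /Acor big_distrl.
Qed.

Lemma inv_parseval (R : realType) m n (f : vec n -> bool) y :
  \sum_w Gsum R m f w * (Gsum R m f w)^* * sgn R (vdot y w) = 2 ^+ n * Acor R m f y.
Proof.
under eq_bigr do rewrite parseval big_distrl /=.
rewrite exchange_big /=.
transitivity (\sum_z Acor R m f z * (if vxor z y == vzero n then 2 ^+ n else 0)).
  apply: eq_bigr => z _; rewrite -orth big_distrr /=; apply: eq_bigr => w _.
  by rewrite vdot_xor sgnD mulrA.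
rewrite (bigD1 y) //= big1 ?addr0.
  by rewrite vxor_eq0 eqxx mulrC.
by move=> z nz; rewrite vxor_eq0 (negbTE nz) mulr0.
Qed.

Lemma autocorr_A (R : realType) m n (f : vec n -> bool) y :
  mautocorr R m f y = zeta R m ^+ wt y * Acor R m f y.
Proof.
rewrite /mautocorr /Acor big_distrr; apply: eq_bigr => x _ /=.
rewrite /gfun rmorphM /= sgn_conj rmorphXn /= sgnD.
set z := zeta R m.
have key : z ^+ wt x * z ^+ wt y * z^* ^+ wt (vxor x y) = (z ^+ 2) ^+ vodot x y.
  rewrite -exprD wt_xor exprD exprM mulrAC -exprMn zeta_conj expr1n.
  by rewrite mul1r.
rewrite -key; ring.
Qed.

Lemma bent_iff (R : realType) m n (f : vec n -> bool) :
  mbent R m f <-> forall w, Gsum R m f w * (Gsum R m f w)^* = 2 ^+ n.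
Proof.
set s := (Num.sqrt (2 : R))^-1 ^+ n.
have hsR : s ^+ 2 * 2 ^+ n = 1.
  rewrite /s -exprM mulnC exprM exprVn sqr_sqrtr ?ler0n //.
  by rewrite -exprMn mulVf ?pnatr_eq0 // expr1n.
have hs : (s%:C%C) ^+ 2 * 2 ^+ n = 1 :> R[i].
  by rewrite -(rmorphXn (real_complex R)) -(rmorph_nat (real_complex R) 2)
    -rmorphXn -rmorphM hsR rmorph1.
have key w : `|mHadamard R m f w| ^+ 2 = s%:C%C ^+ 2 * (Gsum R m f w * (Gsum R m f w)^*).
  rewrite normCK /mHadamard -/s rmorphM /= realC_conj -/(Gsum R m f w); ring.
split=> [hb w|hG w].
  have := hb w; move/eqP; rewrite -sqrp_eq1 ?normr_ge0 // key => /eqP h.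
  have -> : Gsum R m f w * (Gsum R m f w)^* =
    (s%:C%C ^+ 2 * 2 ^+ n) * (Gsum R m f w * (Gsum R m f w)^*) by rewrite hs mul1r.
  by rewrite mulrAC h mul1r.
have := hs; rewrite -(hG w) -key => /eqP; rewrite sqrp_eq1 ?normr_ge0 //; by move/eqP.
Qed.

Theorem theorem6 (R : realType) (n m : nat) (hm : (0 < m)%N)
    (f : {ffun 'I_n -> bool} -> bool) :
  mbent R m f <->
  ((forall z : {ffun 'I_n -> bool}, z != vzero n -> mautocorr R m f z = 0) /\
   mautocorr R m f (vzero n) = (2 : R[i]) ^+ n).
Proof.
have wt0 : wt (vzero n) = 0%N by rewrite /wt big1 // => i _; rewrite ffunE.
have z0 : forall k, zeta R m ^+ k != 0.
  move=> k; apply: expf_neq0; apply/eqP => h.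
  by have := zeta_conj R m; rewrite h mul0r => /eqP; rewrite eq_sym oner_eq0.
have two0 : (2 : R[i]) ^+ n != 0 by rewrite expf_neq0 // pnatr_eq0.
rewrite bent_iff; split.
  move=> hG.
  have hA y : Acor R m f y = if y == vzero n then 2 ^+ n else 0.
    apply: (mulfI two0); rewrite -inv_parseval.
    under eq_bigr do rewrite hG.
    by rewrite -big_distrr /= orth.
  split.
    by move=> z nz; rewrite autocorr_A hA (negbTE nz) mulr0.
  by rewrite autocorr_A hA eqxx wt0 expr0 mul1r.
move=> [h1 h2].
have hA y : Acor R m f y = if y == vzero n then 2 ^+ n else 0.
  case: eqP => [->|/eqP ne].
    by rewrite -h2 autocorr_A wt0 expr0 mul1r.
  by apply: (mulfI (z0 (wt y))); rewrite -autocorr_A h1 // mulr0.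
move=> w; rewrite parseval (bigD1 (vzero n)) //= big1 ?addr0.
  rewrite hA eqxx.
  have -> : vdot (vzero n) w = false by rewrite /vdot big1 // => i _; rewrite ffunE.
  by rewrite /sgn expr0 mulr1.
by move=> y ny; rewrite hA (negbTE ny) mul0r.
Qed.
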